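(* Let $\mathcal{X}_0,\tilde{\mathcal{X}}_0,\mathcal{U}_0,\tilde{\mathcal{U}}_0$ be Polish spaces, let $F_*:\mathcal{X}_0\times\mathcal{U}_0\to\tilde{\mathcal{X}}_0\times\tilde{\mathcal{U}}_0$ be a bijection, and define the involution $F:\tilde{\mathcal{X}}_0\times\mathcal{X}_0\times\mathcal{U}_0\to\tilde{\mathcal{X}}_0\times\mathcal{X}_0\times\mathcal{U}_0$ by \[F(a,b,c):=\left(F_*^{(1)}(b,c),\,F_*^{-1}\left(a,F_*^{(2)}(b,c)\right)\right).\] For probability measures $\mu,\nu,\tilde\mu$ on $\mathcal{X}_0,\mathcal{U}_0,\tilde{\mathcal{X}}_0$ respectively, the following are equivalent: (a) $F^{(2,3)}(\tilde\mu\times\mu\times\nu)=\mu\times\nu$; (b) $F(\tilde\mu\times\mu\times\nu)=\tilde\mu\times\mu\times\nu$; (c) there exists a probability measure $\tilde\nu$ on $\tilde{\mathcal{U}}_0$ such that $F_*(\mu\times\nu)=\tilde\mu\times\tilde\nu$.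
   Context: A superscript $(i)$ denotes the $i$th coordinate of a map, and $(2,3)$ the pair of the 2nd and 3rd coordinates. For a measurable map $G$ and a measure $m$, $G(m):=m\circ G^{-1}$ is the pushforward. *)

(* Defs.v *)
From HB Require Import structures.
From mathcomp Require Import all_boot all_order all_algebra.
From mathcomp Require Import all_classical all_reals all_analysis.
Set Implicit Arguments. Unset Strict Implicit. Unset Printing Implicit Defensive.
Import Order.TTheory GRing.Theory Num.Theory.
Local Open Scope classical_set_scope.
Local Open Scope ring_scope.

(* The involution F(a,b,c) := (Fs^(1)(b,c), Fs^{-1}(a, Fs^(2)(b,c))),
   where Gs is the inverse of the bijection Fs. The triple product
   Xt x X x U is encoded as Xt * (X * U). *)
Definition Finv {Xt X U Ut : Type} (Fs : X * U -> Xt * Ut) (Gs : Xt * Ut -> X * U)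
  (p : Xt * (X * U)) : Xt * (X * U) :=
  ((Fs p.2).1, Gs (p.1, (Fs p.2).2)).

Definition Finv23 {Xt X U Ut : Type} (Fs : X * U -> Xt * Ut) (Gs : Xt * Ut -> X * U)
  (p : Xt * (X * U)) : X * U := (Finv Fs Gs p).2.

Definition meas_eq d (T : measurableType d) (R : realType)
  (m1 m2 : set T -> \bar R) : Prop :=
  forall A, measurable A -> m1 A = m2 A.

(* Main.v *)
Require Import Defs.
From HB Require Import structures.
From mathcomp Require Import all_boot all_order all_algebra.
From mathcomp Require Import all_classical all_reals all_analysis.
Import Order.TTheory GRing.Theory Num.Theory.
Local Open Scope classical_set_scope.
Local Open Scope ring_scope.
Local Open Scope ereal_scope.

Definition mkmf d1 d2 (T1 : measurableType d1) (T2 : measurableType d2)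
  (f : T1 -> T2) (mf : measurable_fun setT f) : {mfun T1 >-> T2} :=
  mfun_Sub (mem_set mf : f \in mfun).

Arguments mkmf {d1 d2 T1 T2 f}.

Section helpers.
Context {R : realType}.

Lemma pf_idX d1 d2 d3 (T1 : measurableType d1) (T2 : measurableType d2)
  (T3 : measurableType d3) (P1 : {measure set T1 -> \bar R}) (P2 : probability T2 R)
  (g : {mfun T2 >-> T3}) Z :
  pushforward (P1 \x P2) (fun p => (p.1, g p.2)) Z = (P1 \x distribution P2 g) Z.
Proof.
rewrite /pushforward /= /product_measure1; apply: eq_integral => a _ /=.
rewrite /distribution /pushforward; congr (P2 _).
Qed.

Lemma prodC d1 d2 (T1 : measurableType d1) (T2 : measurableType d2)
  (P1 : {measure set T1 -> \bar R}) (Q1 Q2 : set T2 -> \bar R) Z :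
  meas_eq Q1 Q2 -> measurable Z -> (P1 \x Q1) Z = (P1 \x Q2) Z.
Proof.
move=> QE mZ; rewrite /= /product_measure1; apply: eq_integral => a _ /=.
by apply: QE; apply: measurable_xsection.
Qed.

Lemma swapE d1 d2 d3 (T1 : measurableType d1) (T2 : measurableType d2)
  (T3 : measurableType d3) (P1 : probability T1 R) (P2 : probability T2 R)
  (P3 : probability T3 R) (A : set T2) (E : set (T1 * T3)) :
  measurable A -> measurable E ->
  (P1 \x (P2 \x P3)) [set p | A p.2.1 /\ E (p.1, p.2.2)] = P2 A * (P1 \x P3) E.
Proof.
move=> mA mE; rewrite /= /product_measure1.
rewrite (eq_integral (fun a => P2 A * P3 (xsection E a))); last first.
  move=> a _ /=.
  have -> : xsection [set p | A p.2.1 /\ E (p.1, p.2.2)] a = A `*` xsection E a.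
    by apply/seteqP; split => -[x u]; rewrite /xsection /= !inE.
  exact: (product_measure1E P2 P3 mA (measurable_xsection a mE)).
rewrite ge0_integralZl //; exact: (measurable_fun_xsection P3 mE).
Qed.
End helpers.
Arguments prodC {R d1 d2 T1 T2 P1 Q1 Q2 Z}.
Arguments swapE {R d1 d2 d3 T1 T2 T3 P1 P2 P3 A E}.
Arguments pf_idX {R d1 d2 d3 T1 T2 T3 P1 P2 g Z}.
Section main.
Context (R : realType) (d0 dt du dut : measure_display)
  (X : measurableType d0) (Xt : measurableType dt)
  (U : measurableType du) (Ut : measurableType dut)
  (Fs : X * U -> Xt * Ut) (Gs : Xt * Ut -> X * U)
  (FsK : cancel Fs Gs) (GsK : cancel Gs Fs)
  (mFs : measurable_fun [set: X * U] Fs)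
  (mGs : measurable_fun [set: Xt * Ut] Gs)
  (mu : probability X R) (nu : probability U R) (mut : probability Xt R).

Let mFs1 : measurable_fun setT (fun p : X * U => (Fs p).1) :=
  measurableT_comp measurable_fst mFs.
Let mFs2 : measurable_fun setT (fun p : X * U => (Fs p).2) :=
  measurableT_comp measurable_snd mFs.

Let mF : measurable_fun setT (Finv Fs Gs).
Proof.
apply: measurable_fun_pair; first exact: (measurableT_comp mFs1 measurable_snd).
apply: (measurableT_comp mGs); apply: measurable_fun_pair; first exact: measurable_fst.
exact: (measurableT_comp mFs2 measurable_snd).
Qed.

Let mK : measurable_fun setT (fun q : Xt * (Xt * Ut) => (q.2.1, Gs (q.1, q.2.2))).
Proof.
apply: measurable_fun_pair.
  exact: (measurableT_comp measurable_fst measurable_snd).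
apply: (measurableT_comp mGs); apply: measurable_fun_pair; first exact: measurable_fst.
exact: (measurableT_comp measurable_snd measurable_snd).
Qed.

Lemma step_ac :
  meas_eq (pushforward (mut \x (mu \x nu)) (Finv23 Fs Gs)) (mu \x nu) ->
  exists nut : probability Ut R,
         meas_eq (pushforward (mu \x nu) Fs) (mut \x nut).
Proof.
move=> ha; exists (distribution (mu \x nu) (mkmf mFs2)) => Z mZ.
have mFZ : measurable (Fs @^-1` Z).
  by rewrite -[X in measurable X]setTI; exact: mFs.
rewrite /pushforward -(ha _ mFZ) /pushforward.
have -> : Finv23 Fs Gs @^-1` (Fs @^-1` Z) =
          (fun p => (p.1, (mkmf mFs2) p.2)) @^-1` Z.
  by apply/seteqP; split => p; rewrite /preimage /Finv23 /Finv /= GsK.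
exact: pf_idX.
Qed.

Lemma step_ba :
  meas_eq (pushforward (mut \x (mu \x nu)) (Finv Fs Gs)) (mut \x (mu \x nu)) ->
  meas_eq (pushforward (mut \x (mu \x nu)) (Finv23 Fs Gs)) (mu \x nu).
Proof.
move=> hb D mD.
have mTD : measurable (@setT Xt `*` D) by apply: measurableX.
have -> : pushforward (mut \x (mu \x nu)) (Finv23 Fs Gs) D =
  pushforward (mut \x (mu \x nu)) (Finv Fs Gs) (setT `*` D).
  rewrite /pushforward; congr (_ _).
  by apply/seteqP; split => p; rewrite /preimage /setX /=; move=> //[].
rewrite hb // (product_measure1E mut (mu \x nu : probability _ R) measurableT mD) /=.
rewrite -[RHS]mul1e; congr (_ * _); exact: probability_setT.
Qed.

Lemma step_cb :
  (exists nut : probability Ut R,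
         meas_eq (pushforward (mu \x nu) Fs) (mut \x nut)) ->
  meas_eq (pushforward (mut \x (mu \x nu)) (Finv Fs Gs)) (mut \x (mu \x nu)).
Proof.
move=> [nut hc] Z mZ; apply/esym.
refine (@product_measure_unique _ _ _ _ _ mut (mu \x nu : probability _ R) (distribution (mut \x (mu \x nu)) (mkmf mF)) _ Z mZ) => A D mA mD.
have mGD : measurable (Gs @^-1` D).
  by rewrite -[X in measurable X]setTI; exact: mGs.
have mW : measurable ((fun q : Xt * (Xt * Ut) => (q.2.1, Gs (q.1, q.2.2))) @^-1` (A `*` D)).
  by rewrite -[X in measurable X]setTI; apply: mK => //; exact: measurableX.
rewrite [LHS](_ : _ = pushforward (mut \x (mu \x nu)) (fun p => (p.1, (mkmf mFs) p.2))
     ((fun q : Xt * (Xt * Ut) => (q.2.1, Gs (q.1, q.2.2))) @^-1` (A `*` D))) //.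
rewrite pf_idX (prodC hc) //.
have -> : (fun q : Xt * (Xt * Ut) => (q.2.1, Gs (q.1, q.2.2))) @^-1` (A `*` D) =
   [set p | A p.2.1 /\ (Gs @^-1` D) (p.1, p.2.2)] by [].
rewrite swapE // -hc // /pushforward.
by have -> : Fs @^-1` (Gs @^-1` D) = D by apply/seteqP; split => p; rewrite /preimage /= FsK.
Qed.
End main.

Theorem proposition2p8 (R : realType)
  (d0 dt du dut : measure_display)
  (X : measurableType d0) (Xt : measurableType dt)
  (U : measurableType du) (Ut : measurableType dut)
  (Fs : X * U -> Xt * Ut) (Gs : Xt * Ut -> X * U)
  (FsK : cancel Fs Gs) (GsK : cancel Gs Fs)
  (mFs : measurable_fun [set: X * U] Fs)
  (mGs : measurable_fun [set: Xt * Ut] Gs)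
  (mu : probability X R) (nu : probability U R) (mut : probability Xt R) :
  [<-> meas_eq (pushforward (mut \x (mu \x nu)) (Finv23 Fs Gs)) (mu \x nu);
       meas_eq (pushforward (mut \x (mu \x nu)) (Finv Fs Gs)) (mut \x (mu \x nu));
       exists nut : probability Ut R,
         meas_eq (pushforward (mu \x nu) Fs) (mut \x nut)].
Proof.
have ac := @step_ac R d0 dt du dut X Xt U Ut Fs Gs GsK mFs mu nu mut.
have ba := @step_ba R d0 dt du dut X Xt U Ut Fs Gs mu nu mut.
have cb := @step_cb R d0 dt du dut X Xt U Ut Fs Gs FsK mFs mGs mu nu mut.
tfae.
- by move=> /ac /cb.
- by move=> /ba /ac.
- by move=> /cb /ba.
Qed.
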